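(* Let $T_9=\mathbf{e}^1_1\otimes(\mathbf{e}^2_1\otimes\mathbf{e}^3_1+\mathbf{e}^2_2\otimes\mathbf{e}^3_3)+\mathbf{e}^1_2\otimes(\mathbf{e}^2_1\otimes\mathbf{e}^3_2+\mathbf{e}^2_2\otimes\mathbf{e}^3_4)\in\mathbb{C}^2\otimes\mathbb{C}^2\otimes\mathbb{C}^4$ and let $f(\mathbf{x},\mathbf{y},\mathbf{z})=x_1y_1z_1+x_2y_1z_2+x_1y_2z_3+x_2y_2z_4$ for $\mathbf{x},\mathbf{y}\in\mathbb{C}^2,\mathbf{z}\in\mathbb{C}^4$. Let $T\in\mathbb{C}^2\otimes\mathbb{C}^2\otimes\mathbb{C}^4$ and $(A,B,C)\in\mathrm{GL}_2\times\mathrm{GL}_2\times\mathrm{GL}_4$ with $(A,B,C)\cdot T=T_9$. Then a rank-one tensor $\mathbf{a}\otimes\mathbf{b}\otimes\mathbf{c}$ lies in the forbidden locus of $T$ if and only if $f(A\mathbf{a},B\mathbf{b},C\mathbf{c})=0$ (equivalently $\langle (A^T\otimes B^T\otimes C^T)\cdot T_9^*,\mathbf{a}\otimes\mathbf{b}\otimes\mathbf{c}\rangle=0$, where $T_9^*$ is $T_9$ written in the dual basis).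
   Context: $\mathbf{e}^i_j$ denotes the $j$-th standard basis vector of the $i$-th factor. The group $\mathrm{GL}_{n_1}\times\mathrm{GL}_{n_2}\times\mathrm{GL}_{n_3}$ acts by $(A,B,C)\cdot(\mathbf{a}\otimes\mathbf{b}\otimes\mathbf{c})=A\mathbf{a}\otimes B\mathbf{b}\otimes C\mathbf{c}$, extended linearly. The rank of a tensor is the minimal number of rank-one tensors summing to it. A rank-one tensor $P$ is in the forbidden locus of $T$ if $\mathrm{rk}(T-\lambda P)\ge\mathrm{rk}(T)$ for all $\lambda\in\mathbb{C}$. (Here $\mathrm{rk}(T)=4$.) *)

(* Defs.v *)
(* The field of complex numbers is modelled as
   C := R[i] = complex R for an arbitrary R : realType (mathcomp-analysis
   reals; real closed), i.e. the complex numbers built from the reals. *)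
From HB Require Import structures.
From mathcomp Require Import all_boot all_order all_algebra.
From mathcomp Require Import boolp reals.
From mathcomp Require Import complex.
Set Implicit Arguments. Unset Strict Implicit. Unset Printing Implicit Defensive.
Import Order.TTheory GRing.Theory Num.Theory.
Local Open Scope ring_scope.

Definition tensor (K : Type) (n1 n2 n3 : nat) := 'I_n1 -> 'I_n2 -> 'I_n3 -> K.

Section Tensors.
Variables (K : fieldType) (n1 n2 n3 : nat).

Definition tprod (a : 'cV[K]_n1) (b : 'cV[K]_n2) (c : 'cV[K]_n3)
  : tensor K n1 n2 n3 := fun i j k => a i 0 * b j 0 * c k 0.

Definition is_rank_one (P : tensor K n1 n2 n3) : Prop :=
  exists a b c, (forall i j k, P i j k = tprod a b c i j k) /\
                exists i j k, P i j k != 0.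

Definition rank_le (r : nat) (T : tensor K n1 n2 n3) : Prop :=
  exists (a : 'I_r -> 'cV[K]_n1) (b : 'I_r -> 'cV[K]_n2) (c : 'I_r -> 'cV[K]_n3),
    forall i j k, T i j k = \sum_(l < r) tprod (a l) (b l) (c l) i j k.

Lemma rank_le_exists (T : tensor K n1 n2 n3) : exists r, `[< rank_le r T >].
Proof.
exists #|@predT ('I_n1 * 'I_n2 * 'I_n3)%type|; apply/asboolP.
pose e (l : 'I_#|@predT ('I_n1 * 'I_n2 * 'I_n3)%type|) : ('I_n1 * 'I_n2 * 'I_n3)%type := enum_val l.
exists (fun l => \col_(i < n1) ((i == (e l).1.1)%:R * T (e l).1.1 (e l).1.2 (e l).2)).
exists (fun l => \col_(j < n2) (j == (e l).1.2)%:R).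
exists (fun l => \col_(k < n3) (k == (e l).2)%:R).
move=> i j k; rewrite /tprod.
under eq_bigr => l _ do rewrite !mxE.
rewrite -(big_enum_val (A := predT) (fun p : ('I_n1 * 'I_n2 * 'I_n3)%type =>
  ((i == p.1.1)%:R * T p.1.1 p.1.2 p.2) * (j == p.1.2)%:R * (k == p.2)%:R)) /=.
rewrite (bigD1 (i, j, k)) //= !eqxx !mulr1 mul1r big1 ?addr0 // => -[[i' j'] k'] /=.
rewrite !xpair_eqE.
rewrite ![_ == i']eq_sym ![_ == j']eq_sym ![_ == k']eq_sym.
case: (i' == i) => /=; last by rewrite !mul0r.
case: (j' == j) => /=; last by rewrite mulr0 mul0r.
case: (k' == k) => /=; first by []. by rewrite mulr0.
Qed.

Definition trank (T : tensor K n1 n2 n3) : nat := ex_minn (rank_le_exists T).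

Definition tsub (T P : tensor K n1 n2 n3) (l : K) : tensor K n1 n2 n3 :=
  fun i j k => T i j k - l * P i j k.

Definition forbidden (T P : tensor K n1 n2 n3) : Prop :=
  is_rank_one P /\ forall l : K, (trank (tsub T P l) >= trank T)%N.

Definition tact (A : 'M[K]_n1) (B : 'M[K]_n2) (C : 'M[K]_n3)
  (T : tensor K n1 n2 n3) : tensor K n1 n2 n3 :=
  fun i j k => \sum_(i' < n1) \sum_(j' < n2) \sum_(k' < n3)
                 A i i' * B j j' * C k k' * T i' j' k'.
End Tensors.

(* T_9 = e1 (x) (e1 (x) e1 + e2 (x) e3) + e2 (x) (e1 (x) e2 + e2 (x) e4),
   with 0-based indices: nonzero (=1) exactly at (0,0,0),(0,1,2),(1,0,1),(1,1,3),
   i.e. when k = 2 j + i. *)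
Definition T9 (K : fieldType) : tensor K 2 2 4 :=
  fun i j k => if (k == (2 * j + i)%N :> nat) then 1 else 0.

Definition f9 (K : fieldType) (x : 'cV[K]_2) (y : 'cV[K]_2) (z : 'cV[K]_4) : K :=
  x 0 0 * y 0 0 * z 0 0 + x 1 0 * y 0 0 * z 1 0
  + x 0 0 * y 1 0 * z 2 0 + x 1 0 * y 1 0 * z 3 0.

(* Main.v *)
Require Import Defs.
From HB Require Import structures.
From mathcomp Require Import all_boot all_order all_algebra.
From mathcomp Require Import boolp reals complex ring.
Import Order.TTheory GRing.Theory Num.Theory.
Local Open Scope ring_scope.
Set Implicit Arguments. Unset Strict Implicit.

Section Gen.
Variables (K : fieldType) (n1 n2 n3 : nat).
Implicit Types (T X Y : tensor K n1 n2 n3).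

Lemma trank_spec T : rank_le (trank T) T.
Proof. rewrite /trank; case: ex_minnP => m /asboolP. done. Qed.

Lemma trank_min T r : rank_le r T -> (trank T <= r)%N.
Proof. rewrite /trank; case: ex_minnP => m _ H Hr; apply: H; exact/asboolP. Qed.

Lemma rank_le_ext r X Y : (forall i j k, X i j k = Y i j k) -> rank_le r X -> rank_le r Y.
Proof. move=> E [a [b [c H]]]; exists a, b, c => i j k; by rewrite -E. Qed.

Lemma trank_eq X Y : (forall r, rank_le r X <-> rank_le r Y) -> trank X = trank Y.
Proof.
move=> H; apply/eqP; rewrite eqn_leq; apply/andP; split; apply: trank_min.
  by apply/H; apply: trank_spec.
by apply/H; apply: trank_spec.
Qed.

Lemma tact_ext A B C X Y : (forall i j k, X i j k = Y i j k) ->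
  forall i j k, tact A B C X i j k = tact A B C Y i j k.
Proof.
move=> E i j k; rewrite /tact; apply: eq_bigr => i' _; apply: eq_bigr => j' _;
apply: eq_bigr => k' _; by rewrite E.
Qed.

Lemma sum3 (I J L : finType) (u : I -> K) (v : J -> K) (w : L -> K) :
  (\sum_i u i) * (\sum_j v j) * (\sum_l w l) = \sum_i \sum_j \sum_l (u i * v j * w l).
Proof.
rewrite big_distrl /= big_distrl /=; apply: eq_bigr => i _.
rewrite (big_distrr (u i)) /= big_distrl /=; apply: eq_bigr => j _.
by rewrite big_distrr.
Qed.

Lemma tact_sum r A B C X (a : 'I_r -> 'cV[K]_n1) b c :
  (forall i j k, X i j k = \sum_(l < r) tprod (a l) (b l) (c l) i j k) ->
  forall i j k, tact A B C X i j k =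
     \sum_(l < r) tprod (A *m a l) (B *m b l) (C *m c l) i j k.
Proof.
move=> E i j k; rewrite /tact /tprod.
under [RHS]eq_bigr => l _ do rewrite !mxE sum3.
transitivity (\sum_(i' < n1) \sum_(j' < n2) \sum_(k' < n3) \sum_(l < r)
   (A i i' * a l i' 0 * (B j j' * b l j' 0) * (C k k' * c l k' 0))).
  apply: eq_bigr => i' _; apply: eq_bigr => j' _; apply: eq_bigr => k' _.
  rewrite E /tprod mulr_sumr; apply: eq_bigr => l _; ring.
rewrite [RHS]exchange_big; apply: eq_bigr => i' _ /=.
rewrite [RHS]exchange_big; apply: eq_bigr => j' _ /=.
by rewrite [RHS]exchange_big.
Qed.

Lemma tact_comp A B C A' B' C' X : forall i j k,
  tact A' B' C' (tact A B C X) i j k = tact (A' *m A) (B' *m B) (C' *m C) X i j k.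
Proof.
have [r /asboolP [a [b [c E]]]] := rank_le_exists X.
move=> i j k; rewrite (tact_sum A' B' C' (tact_sum A B C E)) (tact_sum _ _ _ E).
by apply: eq_bigr => l _; rewrite !mulmxA.
Qed.

Lemma tact_id X : forall i j k, tact 1%:M 1%:M 1%:M X i j k = X i j k.
Proof.
have [r /asboolP [a [b [c E]]]] := rank_le_exists X.
move=> i j k; rewrite (tact_sum _ _ _ E) E.
by apply: eq_bigr => l _; rewrite !mul1mx.
Qed.

Lemma rank_le_tact r A B C X : rank_le r X -> rank_le r (tact A B C X).
Proof.
move=> [a [b [c E]]]; exists (fun l => A *m a l), (fun l => B *m b l), (fun l => C *m c l).
exact: tact_sum.
Qed.

Lemma rank_le_tactV r A B C X : A \in unitmx -> B \in unitmx -> C \in unitmx ->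
  rank_le r (tact A B C X) -> rank_le r X.
Proof.
move=> uA uB uC /(rank_le_tact (invmx A) (invmx B) (invmx C)).
apply: rank_le_ext => i j k.
by rewrite tact_comp !mulVmx // tact_id.
Qed.

Lemma trank_tact A B C X : A \in unitmx -> B \in unitmx -> C \in unitmx ->
  trank (tact A B C X) = trank X.
Proof.
move=> uA uB uC; apply: trank_eq => r; split; first exact: rank_le_tactV.
exact: rank_le_tact.
Qed.

Lemma tact_tsub A B C X Y l : forall i j k,
  tact A B C (tsub X Y l) i j k = tsub (tact A B C X) (tact A B C Y) l i j k.
Proof.
move=> i j k; rewrite /tact /tsub mulr_sumr -sumrB; apply: eq_bigr => i' _.
rewrite mulr_sumr -sumrB; apply: eq_bigr => j' _.
rewrite mulr_sumr -sumrB; apply: eq_bigr => k' _; ring.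
Qed.

Lemma tact_tprod A B C (a : 'cV[K]_n1) (b : 'cV[K]_n2) (c : 'cV[K]_n3) : forall i j k,
  tact A B C (tprod a b c) i j k = tprod (A *m a) (B *m b) (C *m c) i j k.
Proof.
move=> i j k.
have E : forall i j k, tprod a b c i j k =
   \sum_(l < 1) tprod ((fun _ => a) l) ((fun _ => b) l) ((fun _ => c) l) i j k.
  by move=> *; rewrite big_ord1.
by rewrite (tact_sum _ _ _ E) big_ord1.
Qed.
End Gen.
Section Spec.
Variable K : fieldType.

Definition io (p : 'I_4) : 'I_2 := inord (p %% 2).
Definition jo (p : 'I_4) : 'I_2 := inord (p %/ 2).

Lemma io0 : io 0 = 0. Proof. by apply/val_inj; rewrite /= inordK. Qed.
Lemma io1 : io 1 = 1. Proof. by apply/val_inj; rewrite /= inordK. Qed.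
Lemma io2 : io 2 = 0. Proof. by apply/val_inj; rewrite /= inordK. Qed.
Lemma io3 : io 3 = 1. Proof. by apply/val_inj; rewrite /= inordK. Qed.
Lemma jo0 : jo 0 = 0. Proof. by apply/val_inj; rewrite /= inordK. Qed.
Lemma jo1 : jo 1 = 0. Proof. by apply/val_inj; rewrite /= inordK. Qed.
Lemma jo2 : jo 2 = 1. Proof. by apply/val_inj; rewrite /= inordK. Qed.
Lemma jo3 : jo 3 = 1. Proof. by apply/val_inj; rewrite /= inordK. Qed.

Lemma ord2E (i : 'I_2) : i = 0 \/ i = 1.
Proof. case: i => [[|[|?]] Hi]; [left|right|by []]; exact/val_inj. Qed.
Lemma ord4E (i : 'I_4) : [\/ i = 0, i = 1, i = 2 | i = 3].
Proof.
case: i => [[|[|[|[|?]]]] Hi]; [apply: Or41|apply: Or42|apply: Or43|apply: Or44|by []];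
exact/val_inj.
Qed.

Lemma sum4 (F : 'I_4 -> K) : \sum_p F p = F 0 + F 1 + F 2 + F 3.
Proof.
rewrite !big_ord_recr big_ord0 /= add0r.
by congr (F _ + F _ + F _ + F _); apply/val_inj.
Qed.

Definition flat (X : tensor K 2 2 4) : 'M[K]_4 := \matrix_(k, p) X (io p) (jo p) k.

Lemma flat_lb r X : rank_le r X -> flat X \in unitmx -> (4 <= r)%N.
Proof.
move=> [a [b [c E]]] U.
pose Xm : 'M[K]_(4, r) := \matrix_(k, l) c l k 0.
pose Ym : 'M[K]_(r, 4) := \matrix_(l, p) (a l (io p) 0 * b l (jo p) 0).
have E2 : flat X = Xm *m Ym.
  apply/matrixP => k p; rewrite !mxE E; apply: eq_bigr => l _; rewrite !mxE /tprod; ring.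
rewrite E2 in U; move/mxrank_unit: U => H.
by rewrite -H (leq_trans (mxrankM_maxl _ _)) // rank_leq_col.
Qed.

Variables (x y : 'cV[K]_2) (z : 'cV[K]_4).
Definition wr : 'rV[K]_4 := \row_p (x (io p) 0 * y (jo p) 0).

Lemma io_jo (p : 'I_4) : (2 * jo p + io p)%N = p.
Proof. by case: (ord4E p) => ->; rewrite ?io0 ?io1 ?io2 ?io3 ?jo0 ?jo1 ?jo2 ?jo3. Qed.

Lemma flat_S l : flat (tsub (T9 K) (tprod x y z) l) = 1%:M - l *: (z *m wr).
Proof.
apply/matrixP => k p; rewrite !mxE big_ord1 !mxE /tsub /tprod /T9 io_jo.
congr (_ - _); last by ring.
by case: ifP => H; rewrite -[k == p]/((k:nat) == p) H.
Qed.

Lemma wrz : wr *m z = (f9 x y z)%:M.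
Proof.
apply/matrixP => i j; rewrite !ord1 !mxE sum4 !mxE /f9.
rewrite ?io0 ?io1 ?io2 ?io3 ?jo0 ?jo1 ?jo2 ?jo3 /=; ring.
Qed.

Lemma flat_S_unit l : l * f9 x y z = 0 -> flat (tsub (T9 K) (tprod x y z) l) \in unitmx.
Proof.
move=> H; rewrite flat_S.
have := @mulmx1_unit _ _ (1%:M - l *: (z *m wr)) (1%:M + l *: (z *m wr)).
case=> //.
rewrite mulmxBl !mulmxDr !mul1mx mulmx1 -scalemxAr -scalemxAl.
rewrite !mulmxA -(mulmxA z wr z) wrz mul_mx_scalar -scalemxAl !scalerA.
by rewrite -mulrA H mulr0 scale0r addr0 addrK.
Qed.

Lemma rank_T9 : rank_le 4 (T9 K).
Proof.
exists (fun l => delta_mx (io l) 0), (fun l => delta_mx (jo l) 0), (fun l => delta_mx l 0).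
move=> i j k; rewrite sum4 /tprod !mxE ?io0 ?io1 ?io2 ?io3 ?jo0 ?jo1 ?jo2 ?jo3.
case: (ord2E i) => ->; case: (ord2E j) => ->; case: (ord4E k) => ->; rewrite /T9 /=; ring.
Qed.

Lemma sum3o (F : 'I_3 -> K) : \sum_l F l = F 0 + F 1 + F 2.
Proof.
rewrite !big_ord_recr big_ord0 /= add0r.
by congr (F _ + F _ + F _); apply/val_inj.
Qed.

Definition vec2 (p q : K) : 'cV[K]_2 := \col_i (if i == 0 then p else q).

Section Dec.
Let x0 := x 0 0. Let x1 := x 1 0. Let y0 := y 0 0. Let y1 := y 1 0.
Let z0 := z 0 0. Let z1 := z 1 0. Let z2 := z 2 0. Let z3 := z 3 0.
Let f := f9 x y z.
Let u0 := - (z1 * y0 + z3 * y1). Let u1 := z0 * y0 + z2 * y1.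
Let v0 := - (z2 * x0 + z3 * x1). Let v1 := z0 * x0 + z1 * x1.
Let d := u0 * (z0 * v0 + z2 * v1) + u1 * (z1 * v0 + z3 * v1).
Let t := d / f.
Let Xp (i : 'I_2) := if i == 0 then - x1 else x0.
Let Up (i : 'I_2) := if i == 0 then u1 else - u0.
Let Yp (i : 'I_2) := if i == 0 then - y1 else y0.
Let Vp (i : 'I_2) := if i == 0 then v1 else - v0.
Let del i j := Xp i * Yp j / (f * f).
Let bet i j := Up i * Yp j / (f * f).
Let gam i j := Xp i * Vp j / (f * f).
Let av (l : 'I_3) := if l == 0 then vec2 x0 x1 else if l == 1 then vec2 u0 u1
                     else vec2 (x0 + u0) (x1 + u1).
Let bv (l : 'I_3) := if l == 0 then vec2 v0 v1 else if l == 1 then vec2 y0 y1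
                     else vec2 (v0 - t * y0) (v1 - t * y1).
Let cv (l : 'I_3) : 'cV[K]_4 := \col_k (if l == 0 then bet (io k) (jo k) - del (io k) (jo k)
   else if l == 1 then gam (io k) (jo k) + del (io k) (jo k) * t else del (io k) (jo k)).

Lemma rank_S3 : f != 0 -> rank_le 3 (tsub (T9 K) (tprod x y z) f^-1).
Proof.
move=> Hf; exists av, bv, cv => i j k.
rewrite sum3o /tsub /tprod /av /bv /cv /vec2 !mxE /=.
have Ex0 : x 0 0 = x0 by []. have Ex1 : x 1 0 = x1 by [].
have Ey0 : y 0 0 = y0 by []. have Ey1 : y 1 0 = y1 by [].
rewrite /del /bet /gam /Xp /Up /Yp /Vp.
case: (ord2E i) => ->; case: (ord2E j) => ->; case: (ord4E k) => ->;
rewrite ?io0 ?io1 ?io2 ?io3 ?jo0 ?jo1 ?jo2 ?jo3 /T9 /= ?Ex0 ?Ex1 ?Ey0 ?Ey1.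
all: rewrite /t /d /u0 /u1 /v0 /v1.
all: move: Hf; rewrite /f /f9 -/x0 -/x1 -/y0 -/y1 -/z0 -/z1 -/z2 -/z3 => Hf.
all: field.
all: exact: Hf.
Qed.
End Dec.
End Spec.

Unset Implicit Arguments.

Theorem proposition5p1 (R : realType) (T : tensor R[i] 2 2 4)
  (A : 'M[R[i]]_2) (B : 'M[R[i]]_2) (C : 'M[R[i]]_4) :
  A \in unitmx -> B \in unitmx -> C \in unitmx ->
  (forall i j k, tact A B C T i j k = T9 R[i] i j k) ->
  forall (a : 'cV[R[i]]_2) (b : 'cV[R[i]]_2) (c : 'cV[R[i]]_4),
    is_rank_one (tprod a b c) ->
    (forbidden T (tprod a b c) <-> f9 (A *m a) (B *m b) (C *m c) = 0).
Proof.
move=> uA uB uC HT a b c H1.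
set x := A *m a; set y := B *m b; set z := C *m c.
have ES : forall l, trank (tsub T (tprod a b c) l) = trank (tsub (T9 _) (tprod x y z) l).
  move=> l; rewrite -(trank_tact (tsub T (tprod a b c) l) uA uB uC).
  apply: trank_eq => r; split; apply: rank_le_ext => i j k;
    by rewrite tact_tsub /tsub HT tact_tprod.
have E9 : trank (T9 R[i]) = 4%N.
  apply/eqP; rewrite eqn_leq (trank_min (rank_T9 _)) /=.
  apply: (flat_lb (X := tsub (T9 _) (tprod x y z) 0)).
    apply: rank_le_ext (trank_spec (T9 _)) => i j k.
    by rewrite /tsub mul0r subr0.
  by apply: flat_S_unit; rewrite mul0r.
have ET : trank T = 4%N.
  rewrite -(trank_tact T uA uB uC); transitivity (trank (T9 R[i])) => //; apply: trank_eq => r; split;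
    apply: rank_le_ext => i j k; by rewrite HT.
split.
  move=> [_ Hf]; apply/eqP; apply: contraT => Hne.
  have := Hf (f9 x y z)^-1; rewrite ES ET.
  have := trank_min (rank_S3 Hne).
  by move=> H3 H4; have := leq_trans H4 H3.
move=> Hf; split=> // l; rewrite ES ET.
apply: flat_lb (trank_spec _) _.
by apply: flat_S_unit; rewrite Hf mulr0.
Qed.
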